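(* Suppose a group $G$ acts faithfully by order-preserving bijections on a totally ordered set $(\Omega,\le)$. Then the action has no crossings if and only if every left-ordering of $G$ induced from the action (with respect to any well-order on $\Omega$) is Conradian.
   Context: A crossing for the action is a 5-tuple $(f,g,u,v,w)$ with $f,g\in G$, $u,v,w\in\Omega$ such that: $u<w<v$; $g^nu<v$ and $f^nv>u$ for every $n\in\mathbb{N}$; and $f^Nv<w<g^Mu$ for some $M,N\in\mathbb{N}$. Given a well-order $\le^*$ on $\Omega$, the induced ordering $\preceq$ on $G$ is defined as follows: for $f\neq id$ let $w_f=\min_{\le^*}\{w\in\Omega: f(w)\neq w\}$, and declare $f\succ id$ iff $f(w_f)>w_f$; this is a left-ordering. A left-ordering is Conradian if for all $f\succ id$, $g\succ id$ there is $n\in\mathbb{N}$ with $fg^n\succ g$. *)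

(* Defs.v *)
From Stdlib Require Import Arith.
Set Implicit Arguments.

Definition is_group (G : Type) (mul : G -> G -> G) (one : G) (inv : G -> G) : Prop :=
  (forall a b c, mul a (mul b c) = mul (mul a b) c) /\
  (forall a, mul one a = a) /\ (forall a, mul a one = a) /\
  (forall a, mul (inv a) a = one) /\ (forall a, mul a (inv a) = one).

Definition gpow (G : Type) (mul : G -> G -> G) (one : G) (g : G) (n : nat) : G :=
  Nat.iter n (fun x => mul g x) one.

Definition strict_total_order (Omega : Type) (lt : Omega -> Omega -> Prop) : Prop :=
  (forall x, ~ lt x x) /\
  (forall x y z, lt x y -> lt y z -> lt x z) /\
  (forall x y, lt x y \/ x = y \/ lt y x).

Definition faithful_order_action (G Omega : Type) (mul : G -> G -> G) (one : G)
    (lt : Omega -> Omega -> Prop) (act : G -> Omega -> Omega) : Prop :=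
  (forall x, act one x = x) /\
  (forall g h x, act (mul g h) x = act g (act h x)) /\
  (forall g x y, lt x y -> lt (act g x) (act g y)) /\
  (forall g, (forall x, act g x = x) -> g = one).

Definition crossing (G Omega : Type) (mul : G -> G -> G) (one : G)
    (lt : Omega -> Omega -> Prop) (act : G -> Omega -> Omega)
    (f g : G) (u v w : Omega) : Prop :=
  lt u w /\ lt w v /\
  (forall n : nat, lt (act (gpow mul one g n) u) v /\ lt u (act (gpow mul one f n) v)) /\
  (exists M N : nat, lt (act (gpow mul one f N) v) w /\ lt w (act (gpow mul one g M) u)).

Definition has_crossing (G Omega : Type) (mul : G -> G -> G) (one : G)
    (lt : Omega -> Omega -> Prop) (act : G -> Omega -> Omega) : Prop :=
  exists f g u v w, crossing mul one lt act f g u v w.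

Definition well_order (Omega : Type) (wle : Omega -> Omega -> Prop) : Prop :=
  (forall x, wle x x) /\
  (forall x y, wle x y -> wle y x -> x = y) /\
  (forall x y z, wle x y -> wle y z -> wle x z) /\
  (forall x y, wle x y \/ wle y x) /\
  (forall P : Omega -> Prop, (exists x, P x) ->
     exists m, P m /\ forall y, P y -> wle m y).

(** Positive cone of the induced ordering: f > id iff f moves its
    wle-least moved point w_f upward, i.e. f(w_f) > w_f. *)
Definition induced_pos (G Omega : Type) (lt : Omega -> Omega -> Prop)
    (act : G -> Omega -> Omega) (wle : Omega -> Omega -> Prop) (f : G) : Prop :=
  exists w, act f w <> w /\ (forall u, act f u <> u -> wle w u) /\ lt w (act f w).

Definition induced_gt (G Omega : Type) (mul : G -> G -> G) (inv : G -> G)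
    (lt : Omega -> Omega -> Prop) (act : G -> Omega -> Omega)
    (wle : Omega -> Omega -> Prop) (f g : G) : Prop :=
  induced_pos lt act wle (mul (inv g) f).

Definition induced_conradian (G Omega : Type) (mul : G -> G -> G) (one : G)
    (inv : G -> G) (lt : Omega -> Omega -> Prop) (act : G -> Omega -> Omega)
    (wle : Omega -> Omega -> Prop) : Prop :=
  forall f g : G, induced_gt mul inv lt act wle f one -> induced_gt mul inv lt act wle g one ->
    exists n : nat, induced_gt mul inv lt act wle (mul f (gpow mul one g (S n))) g.

(* Main.v *)
Require Import Defs.
From Stdlib Require Import Classical.
From mathcomp Require Import ssreflect ssrfun ssrbool eqtype.
From mathcomp Require Import boolp.
From mathcomp Require wochoice.
From Stdlib Require Import Arith Lia.

Lemma exists_wo_first (T : Type) (x0 : T) :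
  exists wle : T -> T -> Prop, Defs.well_order wle /\ forall y, wle x0 y.
Proof.
have [R HR] := @wochoice.well_ordering_principle {classic T}.
have wc : wochoice.wo_chain R predT by move=> A _; exact: HR A.
have Rtot : forall a b : T, R a b \/ R b a.
  move=> a b; have := wochoice.wo_chainW wc (x:=a) (y:=b) isT isT.
  by case/orP; auto.
have Rrefl : forall a : T, R a a by move=> a; case: (Rtot a a).
have Ranti : forall a b : T, R a b -> R b a -> a = b.
  move=> a b Hab Hba; apply: (wochoice.wo_chain_antisymmetric wc) => //.
  by rewrite Hab Hba.
have Rmin : forall P : T -> Prop, (exists x, P x) ->
   exists m, P m /\ forall y, P y -> R m y.
  move=> P [x Px].
  have ne : wochoice.nonempty [pred z : {classic T} | `[< P z >]].
    by exists x; rewrite inE; apply/asboolP.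
  have [m [[Hm Hlb] _]] := HR _ ne.
  exists m; split; first by move: Hm; rewrite inE => /asboolP.
  move=> y Py; apply: Hlb; rewrite inE; exact/asboolP.
have Rtrans : forall a b c : T, R a b -> R b c -> R a c.
  move=> a b c Hab Hbc.
  have [m [Pm Hm]] := Rmin (fun t => t = a \/ t = b \/ t = c) (ex_intro _ a (or_introl erefl)).
  case: Pm => [e|[e|e]]; subst m.
  - by apply: Hm; auto.
  - have Hba : R b a by apply: Hm; auto.
    by rewrite (Ranti _ _ Hab Hba).
  - have Hcb : R c b by apply: Hm; auto.
    by rewrite -(Ranti _ _ Hbc Hcb).
exists (fun a b => a = x0 \/ (b <> x0 /\ R a b)); split; last by move=> y; left.
split; [|split; [|split; [|split]]].
- move=> a; case: (Classical_Prop.classic (a = x0)) => [->|h]; [left|right] => //.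
- move=> a b [Ha|[Hb Hab]] [Hb'|[Ha' Hba]].
  + by rewrite Ha Hb'.
  + by case: Ha'.
  + by case: Hb.
  + exact: Ranti.
- move=> a b c [Ha|[Hb Hab]] Hbc; first by left.
  right; case: Hbc => [Hb'|[Hc Hbc]]; first by case: Hb.
  split=> //; exact: Rtrans Hab Hbc.
- move=> a b; case: (Classical_Prop.classic (a = x0)) => [Ha|Ha]; first by left; left.
  case: (Classical_Prop.classic (b = x0)) => [Hb|Hb]; first by right; left.
  by case: (Rtot a b) => h; [left|right]; right.
- move=> P Hex; case: (Classical_Prop.classic (P x0)) => [Px0|nP].
  + by exists x0; split=> // y _; left.
  + have [m [Pm Hm]] := Rmin P Hex.
    exists m; split=> // y Py; right; split; last exact: Hm.
    by move=> e; apply: nP; rewrite -e.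
Qed.

Theorem mainTheorem17 (G Omega : Type) (mul : G -> G -> G) (one : G) (inv : G -> G)
    (lt : Omega -> Omega -> Prop) (act : G -> Omega -> Omega)
    (HG : is_group mul one inv) (Hlt : strict_total_order lt)
    (Hact : faithful_order_action mul one lt act) :
  ~ has_crossing mul one lt act <->
  (forall wle : Omega -> Omega -> Prop, well_order wle ->
     induced_conradian mul one inv lt act wle).
Proof.
destruct HG as [Hass [Hl1 [Hr1 [Hlinv Hrinv]]]].
destruct Hlt as [Hirr [Htr Htot]].
destruct Hact as [Ha1 [HaM [Hmono Hfaith]]].
assert (Hinv : forall g x, act (inv g) (act g x) = x).
{ intros g x; rewrite -HaM Hlinv Ha1; reflexivity. }
assert (Hinv' : forall g x, act g (act (inv g) x) = x).
{ intros g x; rewrite -HaM Hrinv Ha1; reflexivity. }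
assert (Hpow : forall g n x, act (gpow mul one g (S n)) x = act g (act (gpow mul one g n) x)).
{ intros g n x; unfold gpow; simpl; apply HaM. }
assert (Hpow0 : forall g x, act (gpow mul one g 0) x = x).
{ intros g x; apply Ha1. }
assert (Hadd : forall g a b x, act (gpow mul one g (a+b)) x
          = act (gpow mul one g a) (act (gpow mul one g b) x)).
{ intros g a b x; induction a as [|a IH].
  - simpl plus; rewrite Hpow0; reflexivity.
  - simpl plus; rewrite !Hpow IH; reflexivity. }
assert (Hmul : forall g M n x, act (gpow mul one (gpow mul one g M) n) x
          = act (gpow mul one g (M*n)) x).
{ intros g M n x; induction n as [|n IH].
  - rewrite Nat.mul_0_r !Hpow0; reflexivity.
  - rewrite Hpow IH Nat.mul_succ_r Nat.add_comm Hadd; reflexivity. }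
assert (Hinvone : inv one = one).
{ rewrite -(Hr1 (inv one)); apply Hlinv. }
assert (Hcancel : forall g x y, lt (act g x) (act g y) -> lt x y).
{ intros g x y h; destruct (Htot x y) as [h1|[h1|h1]]; auto.
  - subst; exfalso; exact (Hirr _ h).
  - exfalso; apply (Hirr (act g x)); exact (Htr _ _ _ h (Hmono _ _ _ h1)). }
assert (Horb : forall g x, lt x (act g x) -> forall n,
          lt (act (gpow mul one g n) x) (act (gpow mul one g (S n)) x)).
{ intros g x hx n; induction n as [|n IH].
  - rewrite (Hpow g 0) !Hpow0; exact hx.
  - rewrite (Hpow g (S n)) (Hpow g n); apply Hmono; rewrite -(Hpow g n); exact IH. }
split.
- intros Hnc wle Hwo f g Hf Hg.
  unfold induced_gt in *. rewrite Hinvone Hl1 in Hf. rewrite Hinvone Hl1 in Hg.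
  apply NNPP; intro Hno.
  assert (Hno' : forall n, ~ induced_pos lt act wle (mul (inv g) (mul f (gpow mul one g (S n))))).
  { intros n h; apply Hno; exists n; exact h. }
  destruct Hwo as [Wr [Wa [Wt [Wtot Wmin]]]].
  destruct Hf as [a [Ha [Hamin Hapos]]]. destruct Hg as [b [Hb [Hbmin Hbpos]]].
  assert (Hgfix : forall y, ~ wle b y -> act g y = y).
  { intros y hy; apply NNPP; intro h; apply hy; apply Hbmin; exact h. }
  assert (Hffix : forall y, ~ wle a y -> act f y = y).
  { intros y hy; apply NNPP; intro h; apply hy; apply Hamin; exact h. }
  assert (Hgpowfix : forall n y, act g y = y -> act (gpow mul one g n) y = y).
  { intros n y hy; induction n as [|n IH].
    - apply Hpow0.
    - rewrite Hpow IH; exact hy. }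
  assert (Hginvfix : forall y, act g y = y -> act (inv g) y = y).
  { intros y hy. transitivity (act (inv g) (act g y)).
    - rewrite hy; reflexivity.
    - apply Hinv. }
  destruct (Classical_Prop.classic (wle b a)) as [Hba|Hnba].
  + assert (Hffix' : forall y, ~ wle b y -> act f y = y).
    { intros y hy; apply Hffix; intro h; apply hy; exact (Wt _ _ _ Hba h). }
    assert (Hfb : lt b (act f b) \/ act f b = b).
    { destruct (Classical_Prop.classic (act f b = b)) as [e|e]; auto.
      left. have e2 := Wa _ _ (Hamin b e) Hba. subst a. exact Hapos. }
    assert (Hkey : forall n, lt (act f (act (gpow mul one g (S n)) b)) (act g b)
                         \/ act f (act (gpow mul one g (S n)) b) = act g b).
    { intro n.
      destruct (Htot (act f (act (gpow mul one g (S n)) b)) (act g b)) as [h|[h|h]]; auto.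
      exfalso. apply (Hno' n).
      assert (Hc : lt b (act (mul (inv g) (mul f (gpow mul one g (S n)))) b)).
      { rewrite HaM HaM. rewrite -{1}(Hinv g b). apply Hmono. exact h. }
      exists b. split; [|split].
      - intro e; rewrite e in Hc; exact (Hirr _ Hc).
      - intros y Hy. apply NNPP; intro Hnb. apply Hy.
        rewrite HaM HaM. rewrite (Hgpowfix _ _ (Hgfix _ Hnb)) (Hffix' _ Hnb).
        apply Hginvfix, Hgfix, Hnb.
      - exact Hc. }
    assert (Hv : forall n, lt (act (gpow mul one g n) b) (act (inv f) (act g b))).
    { intros n.
      assert (Hle : lt (act (gpow mul one g (S n)) b) (act (inv f) (act g b))
                    \/ act (gpow mul one g (S n)) b = act (inv f) (act g b)).
      { destruct (Hkey n) as [h|h].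
        - left; apply (Hcancel f); rewrite Hinv'; exact h.
        - right; rewrite -h Hinv; reflexivity. }
      destruct Hle as [h|h].
      - exact (Htr _ _ _ (Horb g b Hbpos n) h).
      - rewrite -h; exact (Horb g b Hbpos n). }
    assert (Hfgb : forall k, lt b (act (gpow mul one f k) (act g b))).
    { intro k; induction k as [|k IH].
      - rewrite Hpow0; exact Hbpos.
      - rewrite Hpow. have h := Hmono f _ _ IH.
        destruct Hfb as [h'|h'].
        + exact (Htr _ _ _ h' h).
        + rewrite h' in h; exact h. }
    assert (Hfv : forall n, lt b (act (gpow mul one f n) (act (inv f) (act g b)))).
    { intros [|k].
      - rewrite Hpow0. have h := Hv 0. rewrite Hpow0 in h. exact h.
      - replace (S k) with (k + 1) by lia. rewrite Hadd (Hpow f 0) Hpow0 Hinv'.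
        apply Hfgb. }
    have O0 := Horb g b Hbpos 0. have O1 := Horb g b Hbpos 1.
    have O2 := Horb g b Hbpos 2.
    rewrite Hpow0 in O0.
    apply Hnc. exists f, g, b, (act (inv f) (act g b)), (act (gpow mul one g 2) b).
    split; [|split; [|split]].
    * exact (Htr _ _ _ O0 O1).
    * apply Hv.
    * intro n; split; [apply Hv|apply Hfv].
    * exists 3, 1. split.
      -- rewrite (Hpow f 0) Hpow0 Hinv'. rewrite (Hpow g 0) Hpow0 in O1. exact O1.
      -- exact O2.
  + exfalso. apply (Hno' 0).
    assert (Hab : wle a b).
    { destruct (Wtot a b) as [h|h]; auto; contradiction. }
    have Hga := Hgfix a Hnba.
    exists a. 
    assert (Hc : lt a (act (mul (inv g) (mul f (gpow mul one g 1))) a)).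
    { rewrite HaM HaM (Hgpowfix 1 a Hga). rewrite -{1}(Hginvfix a Hga).
      apply Hmono; exact Hapos. }
    split; [|split].
    * intro e; rewrite e in Hc; exact (Hirr _ Hc).
    * intros y Hy. apply NNPP; intro Hny. apply Hy.
      assert (Hnby : ~ wle b y) by (intro h; apply Hny; exact (Wt _ _ _ Hab h)).
      rewrite HaM HaM. rewrite (Hgpowfix _ _ (Hgfix _ Hnby)) (Hffix _ Hny).
      apply Hginvfix, Hgfix, Hnby.
    * exact Hc.
- intros Hcon [f [g [u [v [w [Huw [Hwv [Hn [M [N [HN HM]]]]]]]]]]].
  destruct (exists_wo_first _ (act (gpow mul one f N) v)) as [wle [Hwo Hfirst]].
  have Hwo' := Hwo. destruct Hwo' as [Wr [Wa _]].
  have Hux : lt u (act (gpow mul one f N) v) := proj2 (Hn N).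
  assert (HF : induced_gt mul inv lt act wle (mul (gpow mul one g M) (gpow mul one f N)) one).
  { unfold induced_gt; rewrite Hinvone Hl1.
    assert (h : lt (act (gpow mul one f N) v)
              (act (mul (gpow mul one g M) (gpow mul one f N)) (act (gpow mul one f N) v))).
    { rewrite HaM -Hadd.
      have h1 := Hmono (gpow mul one g M) _ _ (proj2 (Hn (N+N))).
      exact (Htr _ _ _ HN (Htr _ _ _ HM h1)). }
    exists (act (gpow mul one f N) v). split; [|split].
    - intro e; rewrite e in h; exact (Hirr _ h).
    - intros y _; apply Hfirst.
    - exact h. }
  assert (HG' : induced_gt mul inv lt act wle (gpow mul one g M) one).
  { unfold induced_gt; rewrite Hinvone Hl1.
    assert (h : lt (act (gpow mul one f N) v) (act (gpow mul one g M) (act (gpow mul one f N) v))).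
    { have h1 := Hmono (gpow mul one g M) _ _ Hux.
      exact (Htr _ _ _ HN (Htr _ _ _ HM h1)). }
    exists (act (gpow mul one f N) v). split; [|split].
    - intro e; rewrite e in h; exact (Hirr _ h).
    - intros y _; apply Hfirst.
    - exact h. }
  destruct (Hcon wle Hwo _ _ HF HG') as [n Hc].
  unfold induced_gt in Hc. destruct Hc as [y [Hy [Hymin Hypos]]].
  assert (Hcx : lt (act (mul (inv (gpow mul one g M))
         (mul (mul (gpow mul one g M) (gpow mul one f N))
            (gpow mul one (gpow mul one g M) (S n)))) (act (gpow mul one f N) v)) (act (gpow mul one f N) v)).
  { rewrite HaM HaM HaM Hinv Hmul.
    apply Hmono.
    have h1 := Hmono (gpow mul one g (M * S n)) _ _ (Htr _ _ _ HN HM).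
    rewrite -Hadd in h1. exact (Htr _ _ _ h1 (proj1 (Hn _))). }
  assert (Hyx : y = act (gpow mul one f N) v).
  { apply Wa; [apply Hymin | apply Hfirst].
    intro e; rewrite e in Hcx; exact (Hirr _ Hcx). }
  subst y. exact (Hirr _ (Htr _ _ _ Hypos Hcx)).
Qed.
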